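(* Let $(S,\mathfrak{n})$ be a Noetherian local ring and $I$ an ideal of $S$. The following are equivalent: (1) $I$ is strongly Lech-independent. (2) For every minimal generating sequence $x_1,\dots,x_r$ of $I$ there is a standard set $\Gamma$ of monomials in $P=k[T_1,\dots,T_r]$ such that for every $i\ge0$, $I^i/I^{i+1}$ is free over $S/I$ with basis the classes of $u(x)$, $u\in\Gamma_i$. (3) For every minimal generating sequence $x_1,\dots,x_r$ of $I$ there is a standard set $\Gamma$ such that for every $i\ge0$, $x_1,\dots,x_r$ is $\Gamma$-expandable from degree $i$ to $i+1$. (4) For every minimal generating sequence $x_1,\dots,x_r$ of $I$ there is a standard set $\Gamma$ such that for all $0\le i<j$, $x_1,\dots,x_r$ is $\Gamma$-expandable from degree $i$ to $j$. If moreover $S$ is complete, these are also equivalent to: (5) For every minimal generating sequence $x_1,\dots,x_r$ of $I$ there is a standard set $\Gamma$ such that for every $i\ge0$, $x_1,\dots,x_r$ is $\Gamma$-expandable from degree $i$ to $\infty$.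
   Context: $I$ is strongly Lech-independent if $I^i/I^{i+1}$ is free over $S/I$ for all $i$. A standard set is a set of monomials closed under taking divisors; $\Gamma_i$ is the set of its monomials of degree $i$. For $u=T_1^{a_1}\cdots T_r^{a_r}$, $u(x)=x_1^{a_1}\cdots x_r^{a_r}$. A lifting is a map $\sigma:S/I\to S$ with $\sigma(0)=0$ and $\pi\circ\sigma=\mathrm{id}_{S/I}$. For $0\le i<j<\infty$, $x_1,\dots,x_r$ is $\Gamma$-expandable from degree $i$ to $j$ if for every lifting $\sigma$, every $f\in I^i$ has a unique representation $f\equiv\sum_{u\in\Gamma_k,\,i\le k\le j-1}f_uu(x)\pmod{I^j}$ with all $f_u\in\sigma(S/I)$; for $S$ complete, $\Gamma$-expandable from degree $i$ to $\infty$ means every $f\in I^i$ has, for every lifting $\sigma$, a unique representation $f=\sum_{u\in\Gamma_k,\,k\ge i}f_uu(x)$ (convergent sum) with all $f_u\in\sigma(S/I)$. *)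

(* Defs.v *)
From HB Require Import structures.
From mathcomp Require Import all_boot all_algebra.
Set Implicit Arguments. Unset Strict Implicit. Unset Printing Implicit Defensive.
Import GRing.Theory.
Local Open Scope ring_scope.

Section Defs.
Variable S : comNzRingType.

Definition is_ideal (I : S -> Prop) : Prop :=
  [/\ I 0, (forall a b, I a -> I b -> I (a + b)) & (forall c a, I a -> I (c * a))].

Definition span (P : S -> Prop) (f : S) : Prop :=
  exists (m : nat) (c g : 'I_m -> S),
    (forall k, P (g k)) /\ f = \sum_(k < m) c k * g k.

Fixpoint ideal_pow (I : S -> Prop) (i : nat) : S -> Prop :=
  match i with
  | 0 => fun _ => True
  | i'.+1 => span (fun z => exists a b, [/\ ideal_pow I i' a, I b & z = a * b])
  end.

Definition gen_by (r : nat) (x : 'I_r -> S) (f : S) : Prop :=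
  exists c : 'I_r -> S, f = \sum_(k < r) c k * x k.

Definition generates (I : S -> Prop) (r : nat) (x : 'I_r -> S) : Prop :=
  forall f, I f <-> gen_by x f.

Definition min_gen_seq (I : S -> Prop) (r : nat) (x : 'I_r -> S) : Prop :=
  generates I x /\ forall (r' : nat) (x' : 'I_r' -> S), generates I x' -> (r <= r')%N.

Definition noetherian : Prop :=
  forall J : S -> Prop, is_ideal J -> exists (r : nat) (x : 'I_r -> S), generates J x.

Definition maximal_ideal (m : S -> Prop) : Prop :=
  [/\ is_ideal m, ~ m 1 &
      forall J, is_ideal J -> (forall a, m a -> J a) -> (forall a, J a <-> m a) \/ J 1].

Definition local_ring (n : S -> Prop) : Prop :=
  maximal_ideal n /\ forall m, maximal_ideal m -> forall a, m a <-> n a.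

Definition adic_cauchy (n : S -> Prop) (a : nat -> S) : Prop :=
  forall k, exists N, forall p q, (N <= p)%N -> (N <= q)%N -> ideal_pow n k (a p - a q).

Definition adic_limit (n : S -> Prop) (a : nat -> S) (l : S) : Prop :=
  forall k, exists N, forall p, (N <= p)%N -> ideal_pow n k (a p - l).

Definition complete (n : S -> Prop) : Prop :=
  forall a, adic_cauchy n a -> exists l, adic_limit n a l.

(* the classes of e j (j in A) form a basis of the S/I-module I^i/I^(i+1) *)
Definition quot_basis (I : S -> Prop) (i : nat) (J : eqType) (A : pred J) (e : J -> S)
  : Prop :=
  [/\ forall j, A j -> ideal_pow I i (e j),
      forall f, ideal_pow I i f ->
        exists (s : seq J) (c : J -> S),
          all A s /\ ideal_pow I i.+1 (f - \sum_(j <- s) c j * e j) &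
      forall (s : seq J) (c : J -> S), uniq s -> all A s ->
        ideal_pow I i.+1 (\sum_(j <- s) c j * e j) -> forall j, j \in s -> I (c j)].

Definition quot_free (I : S -> Prop) (i : nat) : Prop :=
  exists (J : eqType) (e : J -> S), quot_basis I i (@predT J) e.

Definition strongly_Lech_independent (I : S -> Prop) : Prop :=
  forall i, quot_free I i.

(* monomials of k[T_1..T_r] are identified with exponent vectors *)
Definition mon (r : nat) := {ffun 'I_r -> nat}.

Definition mdeg (r : nat) (u : mon r) : nat := (\sum_(k < r) u k)%N.

Definition monx (r : nat) (x : 'I_r -> S) (u : mon r) : S := \prod_(k < r) x k ^+ u k.

Definition standard_set (r : nat) (G : pred (mon r)) : Prop :=
  forall u v : mon r, (forall k, (v k <= u k)%N) -> G u -> G v.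

(* all monomials with every exponent < j (contains all monomials of degree < j) *)
Definition mons_below (r j : nat) : seq (mon r) :=
  [seq [ffun k => nat_of_ord (v k)] | v : {ffun 'I_r -> 'I_j} <- enum {ffun 'I_r -> 'I_j}].

Definition trunc_sum (r : nat) (x : 'I_r -> S) (G : pred (mon r)) (i j : nat)
  (c : mon r -> S) : S :=
  \sum_(u <- mons_below r j | G u && (i <= mdeg u < j)%N) c u * monx x u.

(* L is the image sigma(S/I) of a lifting sigma : S/I -> S with sigma(0) = 0,
   pi o sigma = id; equivalently, a set of representatives of S/I (exactly one
   element in each coset of I) containing 0. *)
Definition lifting_image (I : S -> Prop) (L : S -> Prop) : Prop :=
  L 0 /\ forall a, exists b, [/\ L b, I (a - b) & forall b', L b' -> I (a - b') -> b' = b].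

Definition coefs_in (r : nat) (G : pred (mon r)) (L : S -> Prop) (i j : nat)
  (c : mon r -> S) : Prop :=
  forall u, G u -> (i <= mdeg u < j)%N -> L (c u).

Definition expandable (I : S -> Prop) (r : nat) (x : 'I_r -> S) (G : pred (mon r))
  (i j : nat) : Prop :=
  forall L, lifting_image I L -> forall f, ideal_pow I i f ->
    (exists c, coefs_in G L i j c /\ ideal_pow I j (f - trunc_sum x G i j c)) /\
    (forall c c', coefs_in G L i j c -> coefs_in G L i j c' ->
       ideal_pow I j (f - trunc_sum x G i j c) ->
       ideal_pow I j (f - trunc_sum x G i j c') ->
       forall u, G u -> (i <= mdeg u < j)%N -> c u = c' u).

Definition series_rep (I : S -> Prop) (r : nat) (x : 'I_r -> S) (G : pred (mon r))
  (i : nat) (c : mon r -> S) (f : S) : Prop :=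
  adic_limit I (fun N => trunc_sum x G i N c) f.

Definition expandable_inf (I : S -> Prop) (r : nat) (x : 'I_r -> S) (G : pred (mon r))
  (i : nat) : Prop :=
  forall L, lifting_image I L -> forall f, ideal_pow I i f ->
    (exists c, (forall u, G u -> (i <= mdeg u)%N -> L (c u)) /\ series_rep I x G i c f) /\
    (forall c c', (forall u, G u -> (i <= mdeg u)%N -> L (c u)) ->
       (forall u, G u -> (i <= mdeg u)%N -> L (c' u)) ->
       series_rep I x G i c f -> series_rep I x G i c' f ->
       forall u, G u -> (i <= mdeg u)%N -> c u = c' u).

Definition cond2 (I : S -> Prop) : Prop :=
  forall (r : nat) (x : 'I_r -> S), min_gen_seq I x ->
    exists G : pred (mon r), standard_set G /\
      forall i, quot_basis I i [pred u | G u && (mdeg u == i)] (monx x).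

Definition cond3 (I : S -> Prop) : Prop :=
  forall (r : nat) (x : 'I_r -> S), min_gen_seq I x ->
    exists G : pred (mon r), standard_set G /\ forall i, expandable I x G i i.+1.

Definition cond4 (I : S -> Prop) : Prop :=
  forall (r : nat) (x : 'I_r -> S), min_gen_seq I x ->
    exists G : pred (mon r), standard_set G /\
      forall i j, (i < j)%N -> expandable I x G i j.

Definition cond5 (I : S -> Prop) : Prop :=
  forall (r : nat) (x : 'I_r -> S), min_gen_seq I x ->
    exists G : pred (mon r), standard_set G /\ forall i, expandable_inf I x G i.

End Defs.

(* Main.v *)
Require Import Defs.
From mathcomp Require Import all_boot all_algebra ring zify.
From Stdlib Require Import Classical ClassicalEpsilon FunctionalExtensionality PropExtensionality.
Set Implicit Arguments. Unset Strict Implicit. Unset Printing Implicit Defensive.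
Import GRing.Theory.
Local Open Scope ring_scope.

Notation dspan := Defs.span.
Section Basic.
Variable S : comNzRingType.
Implicit Types (I J Z : S -> Prop) (P Q : S -> Prop).

Lemma id0 I : is_ideal I -> I 0. Proof. by case. Qed.
Lemma idD I a b : is_ideal I -> I a -> I b -> I (a + b). Proof. by case=> _ H _; apply: H. Qed.
Lemma idMl I c a : is_ideal I -> I a -> I (c * a). Proof. by case=> _ _ H; apply: H. Qed.
Lemma idMr I c a : is_ideal I -> I a -> I (a * c). Proof. by move=> hI ha; rewrite mulrC; apply: idMl. Qed.
Lemma idN I a : is_ideal I -> I a -> I (- a).
Proof. by move=> hI ha; rewrite -mulN1r; apply: idMl. Qed.
Lemma idB I a b : is_ideal I -> I a -> I b -> I (a - b).
Proof. by move=> hI ha hb; apply: idD => //; apply: idN. Qed.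
Lemma idBC I a b : is_ideal I -> I (a - b) -> I (b - a).
Proof. by move=> hI h; rewrite -opprB; apply: idN. Qed.
Lemma id_sum I (T : Type) (s : seq T) (p : pred T) (F : T -> S) :
  is_ideal I -> (forall j, p j -> I (F j)) -> I (\sum_(j <- s | p j) F j).
Proof.
move=> hI hF; elim/big_rec: _ => [|j y pj hy]; first exact: id0.
by apply: idD => //; apply: hF.
Qed.
Lemma id_sum_seq I (T : eqType) (s : seq T) (F : T -> S) :
  is_ideal I -> (forall j, j \in s -> I (F j)) -> I (\sum_(j <- s) F j).
Proof.
move=> hI hF; rewrite big_seq_cond; apply: id_sum => // j /andP[hj _]; exact: hF.
Qed.
Lemma id_eq I a b : is_ideal I -> I (a - b) -> I b -> I a.
Proof. by move=> hI h1 h2; rewrite -(subrK b a); apply: idD. Qed.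
Lemma id_trans I a b c : is_ideal I -> I (a - b) -> I (b - c) -> I (a - c).
Proof. by move=> hI h1 h2; rewrite -(subrKA b); apply: idD. Qed.
Lemma idT : is_ideal (fun _ : S => True). Proof. by split. Qed.

Lemma span_gen P y : P y -> dspan P y.
Proof.
move=> hy; exists 1%N, (fun _ => 1), (fun _ => y); split => //.
by rewrite big_ord1 mul1r.
Qed.

Lemma span_ideal P : is_ideal (dspan P).
Proof.
split.
- by exists 0%N, (fun _ => 0), (fun _ => 0); split => [[]//|]; rewrite big_ord0.
- move=> a b [m [c [g [hg ->]]]] [m' [c' [g' [hg' ->]]]].
  exists (m + m')%N, (fun k => match split k with inl i => c i | inr i => c' i end),
    (fun k => match split k with inl i => g i | inr i => g' i end); split.
  + by move=> k; case: (split k).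
  + rewrite big_split_ord /=; congr (_ + _); apply: eq_bigr => i _.
    * by rewrite (unsplitK (inl _ i)).
    * by rewrite (unsplitK (inr _ i)).
- move=> c0 a [m [c [g [hg ->]]]]; exists m, (fun k => c0 * c k), g; split => //.
  by rewrite mulr_sumr; apply: eq_bigr => i _; rewrite mulrA.
Qed.

Lemma span_ind P Z f : is_ideal Z -> (forall y, P y -> Z y) -> dspan P f -> Z f.
Proof.
move=> hZ hP [m [c [g [hg ->]]]]; apply: id_sum => // k _.
by apply: idMl => //; apply: hP.
Qed.

Lemma span_sub P Q f : (forall y, P y -> dspan Q y) -> dspan P f -> dspan Q f.
Proof. by move=> h; apply: span_ind => //; apply: span_ideal. Qed.

Lemma span_mulr P Q y0 f : (forall y, P y -> dspan Q (y * y0)) -> dspan P f -> dspan Q (f * y0).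
Proof.
move=> h hf; apply: (@span_ind P (fun f => dspan Q (f * y0))) hf => //.
split; first by rewrite mul0r; apply: id0; apply: span_ideal.
- by move=> a b ha hb; rewrite mulrDl; apply: idD => //; apply: span_ideal.
- by move=> c a ha; rewrite -mulrA; apply: idMl => //; apply: span_ideal.
Qed.

Lemma span_union P Q f : dspan (fun y => P y \/ Q y) f ->
  exists f1 f2, [/\ dspan P f1, dspan Q f2 & f = f1 + f2].
Proof.
move=> hf; apply: (@span_ind _ (fun f => exists f1 f2, [/\ dspan P f1, dspan Q f2 & f = f1 + f2]) _ _ _ hf).
- split.
  + by exists 0, 0; split; rewrite ?addr0 //; apply: id0; apply: span_ideal.
  + move=> a b [a1 [a2 [h1 h2 ->]]] [b1 [b2 [h3 h4 ->]]].
    exists (a1 + b1), (a2 + b2); split; try (apply: idD => //; apply: span_ideal).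
    by rewrite addrACA.
  + move=> c a [a1 [a2 [h1 h2 ->]]]; exists (c * a1), (c * a2); split;
      try (apply: idMl => //; apply: span_ideal).
    by rewrite mulrDr.
- move=> y [hy|hy].
  + by exists y, 0; split; rewrite ?addr0 //; [apply: span_gen | apply: id0; apply: span_ideal].
  + by exists 0, y; split; rewrite ?add0r //; [apply: id0; apply: span_ideal | apply: span_gen].
Qed.

Lemma span_idem I f : is_ideal I -> dspan I f -> I f.
Proof. by move=> hI; apply: span_ind. Qed.

Lemma pow_ideal I i : is_ideal (ideal_pow I i).
Proof. by case: i => [|i] /=; [split | apply: span_ideal]. Qed.

Lemma pow_succ_sub I i f : ideal_pow I i.+1 f -> ideal_pow I i f.
Proof.
elim: i f => [//|i IH] f /=.
apply: span_sub => y [a [b [ha hb ->]]]; apply: span_gen; exists a, b; split => //.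
exact: IH.
Qed.

Lemma pow_le I i j f : (i <= j)%N -> ideal_pow I j f -> ideal_pow I i f.
Proof.
move=> /subnK <-; elim: (j - i)%N f => [//|k IH] f h.
by apply: IH; apply: pow_succ_sub; exact: h.
Qed.

Lemma pow1 I f : is_ideal I -> (ideal_pow I 1 f <-> I f).
Proof.
move=> hI; split.
- by apply: span_ind => // y [a [b [_ hb ->]]]; apply: idMl.
- by move=> hf; apply: span_gen; exists 1, f; split; rewrite ?mul1r.
Qed.

Lemma pow_mul I i j a b : is_ideal I -> ideal_pow I i a -> ideal_pow I j b ->
  ideal_pow I (i + j) (a * b).
Proof.
move=> hI; elim: j b => [|j IH] b ha hb.
  by rewrite addn0 mulrC; apply: idMl => //; apply: pow_ideal.
rewrite addnS /=; rewrite mulrC; apply: span_mulr hb => y [a' [b' [ha' hb' ->]]].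
apply: span_gen; exists (a * a'), b'; split => //; first exact: IH.
by rewrite mulrC mulrA.
Qed.

Lemma pow_exp I e y : is_ideal I -> I y -> ideal_pow I e (y ^+ e).
Proof.
move=> hI hy; elim: e => [//|e IH]; rewrite exprSr -(addn1 e).
by apply: pow_mul => //; apply/pow1.
Qed.

Lemma pow_full I i : is_ideal I -> I 1 -> forall f, ideal_pow I i f.
Proof.
move=> hI h1 f; rewrite -[f]mulr1; apply: idMl; first exact: pow_ideal.
by rewrite -(expr1n S i); apply: pow_exp.
Qed.

End Basic.

Lemma fchoice (A : eqType) (B : Type) (b0 : B) (s : seq A) (P : A -> B -> Prop) :
  (forall a, a \in s -> exists b, P a b) -> exists f : A -> B, forall a, a \in s -> P a (f a).
Proof.
elim: s => [|a0 s IH] h; first by exists (fun _ => b0).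
have [f hf] : exists f : A -> B, forall a, a \in s -> P a (f a).
  by apply: IH => a ha; apply: h; rewrite inE ha orbT.
have [b hb] := h a0 (mem_head _ _).
exists (fun a => if a == a0 then b else f a) => a; rewrite inE.
by case: eqP => [-> //|_] /= /hf.
Qed.


Lemma count_lt (T : eqType) (a b : pred T) (s : seq T) x :
  (forall w, a w -> b w) -> x \in s -> b x -> ~~ a x -> (count a s < count b s)%N.
Proof.
move=> hab; elim: s => [//|y s IH]; rewrite inE => /orP[/eqP <-|hx] hb ha /=.
  rewrite hb (negbTE ha) add0n add1n ltnS; exact: sub_count.
rewrite -addnS; apply: leq_add; last exact: IH.
by case: (boolP (a y)) => // /hab ->.
Qed.

Lemma list_ind (T : eqType) (lt : rel T) (D : seq T) (P : T -> Prop) :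
  (forall a b c, lt a b -> lt b c -> lt a c) -> (forall a, ~~ lt a a) ->
  (forall u, u \in D -> (forall v, v \in D -> lt v u -> P v) -> P u) ->
  forall u, u \in D -> P u.
Proof.
move=> htr hirr h.
suff: forall N u, u \in D -> (count (lt^~ u) D < N)%N -> P u.
  by move=> H u hu; apply: (H (count (lt^~ u) D).+1).
elim=> [//|N IH] u hu hc; apply: h => // v hv hvu; apply: IH => //.
rewrite -ltnS; apply: leq_trans hc; rewrite ltnS.
apply: (count_lt (x := v)) => //; first by move=> w /= hw; apply: htr hw hvu.
Qed.

Section Sums.
Variable S : comNzRingType.

Lemma sum_delta (T : eqType) (D : seq T) (e : T -> S) j0 a :
  uniq D -> j0 \in D -> \sum_(j <- D) (if j == j0 then a else 0) * e j = a * e j0.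
Proof.
move=> uD hj0; rewrite (big_rem j0) //= eqxx big1_seq ?addr0 // => j /andP[_].
by rewrite mem_rem_uniq // inE => /andP[/negbTE -> _]; rewrite mul0r.
Qed.

Lemma sum_extend (T : eqType) (Q : S -> Prop) (e : T -> S) (s : seq T) (c : T -> S) (D : seq T) :
  is_ideal Q -> uniq D -> {subset s <= D} -> (forall j, j \in s -> Q (c j)) ->
  exists c', (forall j, Q (c' j)) /\ \sum_(j <- s) c j * e j = \sum_(j <- D) c' j * e j.
Proof.
move=> hQ uD; elim: s => [|j0 s IH] hs hc.
  exists (fun _ => 0); split; first by move=> _; apply: id0.
  by rewrite big_nil big1 // => j _; rewrite mul0r.
have [c1 [hc1 e1]] : exists c', (forall j, Q (c' j)) /\ \sum_(j <- s) c j * e j = \sum_(j <- D) c' j * e j.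
  apply: IH; first by move=> j hj; apply: hs; rewrite inE hj orbT.
  by move=> j hj; apply: hc; rewrite inE hj orbT.
exists (fun j => c1 j + (if j == j0 then c j0 else 0)); split.
  move=> j; apply: idD => //; case: eqP => _; [apply: hc; exact: mem_head | exact: id0].
rewrite big_cons e1; under [RHS]eq_bigr do rewrite mulrDl.
rewrite big_split /= sum_delta; [by rewrite addrC | by [] | by apply: hs; exact: mem_head].
Qed.

Lemma span_seq (T : eqType) (Q P : S -> Prop) (D : seq T) (g : T -> S) f :
  is_ideal Q -> uniq D ->
  (forall y, P y -> exists a v, [/\ Q a, v \in D & y = a * g v]) ->
  Defs.span P f -> exists c, (forall v, Q (c v)) /\ f = \sum_(v <- D) c v * g v.
Proof.
move=> hQ uD hP; apply: (@span_ind _ P (fun f => exists c, (forall v, Q (c v)) /\ f = \sum_(v <- D) c v * g v)).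
- split.
  + exists (fun _ => 0); split; first by move=> _; apply: id0.
    by rewrite big1 // => j _; rewrite mul0r.
  + move=> a b [c1 [h1 ->]] [c2 [h2 ->]]; exists (fun v => c1 v + c2 v); split.
      by move=> v; apply: idD.
    by rewrite -big_split; apply: eq_bigr => v _; rewrite mulrDl.
  + move=> c0 a [c1 [h1 ->]]; exists (fun v => c0 * c1 v); split.
      by move=> v; apply: idMl.
    by rewrite mulr_sumr; apply: eq_bigr => v _; rewrite mulrA.
- move=> y /hP [a [v [ha hv ->]]]; exists (fun j => if j == v then a else 0); split.
    by move=> j; case: eqP => _ //; apply: id0.
  by rewrite sum_delta.
Qed.

Lemma sum_restrict (T : eqType) (s D : seq T) (c e : T -> S) :
  uniq s -> uniq D -> {subset s <= D} ->
  \sum_(j <- D) (if j \in s then c j else 0) * e j = \sum_(j <- s) c j * e j.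
Proof.
move=> us uD hsD.
rewrite (eq_bigr (fun j => if j \in s then c j * e j else 0)); last first.
  by move=> j _; case: (j \in s); rewrite ?mul0r.
rewrite -big_mkcond /= -big_filter; apply: perm_big; apply: uniq_perm => //.
  exact: filter_uniq.
by move=> j; rewrite mem_filter; case: (boolP (j \in s)) => // /hsD ->.
Qed.

End Sums.

Section Mon.
Variable r : nat.
Implicit Types u v w : mon r.

Definition madd (u w : mon r) : mon r := [ffun k => (u k + w k)%N].
Definition mdelta (k0 : 'I_r) : mon r := [ffun k => nat_of_bool (k == k0)].
Definition mzero : mon r := [ffun _ => 0%N].
Definition msub (u w : mon r) : mon r := [ffun k => (u k - w k)%N].

Lemma mdeg_add u w : mdeg (madd u w) = (mdeg u + mdeg w)%N.
Proof. by rewrite /mdeg -big_split /=; apply: eq_bigr => k _; rewrite ffunE. Qed.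
Lemma mdeg_zero : mdeg mzero = 0%N.
Proof. by rewrite /mdeg big1 // => k _; rewrite ffunE. Qed.
Lemma mdeg_delta k0 : mdeg (mdelta k0) = 1%N.
Proof.
rewrite /mdeg (bigD1 k0) //= ffunE eqxx big1 // => k hk.
by rewrite ffunE (negbTE hk).
Qed.
Lemma madd_sub u v : (forall k, v k <= u k)%N -> madd v (msub u v) = u.
Proof. by move=> h; apply/ffunP => k; rewrite !ffunE subnKC. Qed.

Lemma mem_mons_below j u : (u \in mons_below r j) = [forall k, (u k < j)%N].
Proof.
apply/idP/idP.
  case/mapP => v _ ->; apply/forallP => k; rewrite ffunE; exact: ltn_ord.
case: j => [|j].
  case: r u => [|r'] u hu.
  - apply/mapP; exists [ffun k : 'I_0 => k]; first by rewrite mem_enum.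
    by apply/ffunP => -[].
  - by have := forallP hu ord0.
move=> hu; apply/mapP; exists [ffun k => inord (u k)]; first by rewrite mem_enum.
apply/ffunP => k; rewrite !ffunE inordK //; exact: (forallP hu k).
Qed.

Lemma uniq_mons_below j : uniq (mons_below r j).
Proof.
rewrite map_inj_uniq ?enum_uniq // => v w /ffunP h; apply/ffunP => k.
by apply: val_inj; have := h k; rewrite !ffunE.
Qed.

Lemma mon_le_deg u k : (u k <= mdeg u)%N.
Proof. by rewrite /mdeg (bigD1 k) //= leq_addr. Qed.

Lemma mem_mons_deg j u : (mdeg u < j)%N -> u \in mons_below r j.
Proof.
move=> h; rewrite mem_mons_below; apply/forallP => k.
exact: leq_ltn_trans (mon_le_deg u k) h.
Qed.

Definition ltlex (u v : mon r) : bool :=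
  [exists k : 'I_r, (u k < v k)%N && [forall j : 'I_r, (j < k)%N ==> (u j == v j)]].

Lemma ltlex_irr u : ~~ ltlex u u.
Proof. by apply/existsP => -[k /andP[]]; rewrite ltnn. Qed.

Lemma ltlex_trans u v w : ltlex u v -> ltlex v w -> ltlex u w.
Proof.
move=> /existsP[k1 /andP[h1 /forallP e1]] /existsP[k2 /andP[h2 /forallP e2]].
apply/existsP; case: (ltngtP k1 k2) => hk.
- exists k1; rewrite -(eqP (implyP (e2 k1) hk)) h1 /=; apply/forallP => j; apply/implyP => hj.
  by rewrite (eqP (implyP (e1 j) hj)) (implyP (e2 j) (ltn_trans hj hk)).
- exists k2; rewrite (eqP (implyP (e1 k2) hk)) h2 /=; apply/forallP => j; apply/implyP => hj.
  by rewrite (eqP (implyP (e1 j) (ltn_trans hj hk))) (implyP (e2 j) hj).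
- have hk' : k1 = k2 by apply: val_inj.
  subst k2; exists k1; rewrite (ltn_trans h1 h2) /=; apply/forallP => j; apply/implyP => hj.
  by rewrite (eqP (implyP (e1 j) hj)) (implyP (e2 j) hj).
Qed.

Lemma ltlex_total u v : u != v -> ltlex u v || ltlex v u.
Proof.
move=> huv.
have [k0 hk0] : exists k0, u k0 != v k0.
  apply/existsP; apply: contraR huv => /existsPn h; apply/eqP/ffunP => k.
  by have := h k; rewrite negbK => /eqP.
case: (@arg_minnP _ k0 (fun k : 'I_r => u k != v k) (fun k : 'I_r => nat_of_ord k) hk0) => k hk hmin.
have e : forall j : 'I_r, (j < k)%N -> u j == v j.
  move=> j hj; apply: contraLR hj => hj; rewrite -leqNgt; exact: hmin.
case: (ltngtP (u k) (v k)) => h.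
- by apply/orP; left; apply/existsP; exists k; rewrite h; apply/forallP => j; apply/implyP; exact: e.
- apply/orP; right; apply/existsP; exists k; rewrite h; apply/forallP => j; apply/implyP => hj.
  by rewrite eq_sym; exact: e.
- by rewrite h eqxx in hk.
Qed.

Lemma ltlex_add u v w : ltlex u v -> ltlex (madd u w) (madd v w).
Proof.
move=> /existsP[k /andP[h /forallP e]]; apply/existsP; exists k.
rewrite !ffunE ltn_add2r h /=; apply/forallP => j; apply/implyP => hj.
by rewrite !ffunE eqn_add2r (implyP (e j) hj).
Qed.

Section MonS.
Variable S : comNzRingType.
Variable x : 'I_r -> S.

Lemma monx_add u w : monx x (madd u w) = monx x u * monx x w.
Proof. by rewrite /monx -big_split /=; apply: eq_bigr => k _; rewrite ffunE exprD. Qed.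
Lemma monx_zero : monx x mzero = 1.
Proof. by rewrite /monx big1 // => k _; rewrite ffunE expr0. Qed.
Lemma monx_delta k0 : monx x (mdelta k0) = x k0.
Proof.
rewrite /monx (bigD1 k0) //= ffunE eqxx expr1 big1 ?mulr1 // => k hk.
by rewrite ffunE (negbTE hk) expr0.
Qed.

Lemma monx_pow (I : S -> Prop) u : is_ideal I -> (forall k, I (x k)) ->
  ideal_pow I (mdeg u) (monx x u).
Proof.
move=> hI hx; rewrite /monx /mdeg.
elim/big_rec2: _ => [//|k d p _ hp].
by apply: pow_mul => //; apply: pow_exp.
Qed.

Definition monos d (y : S) := exists v, mdeg v = d /\ y = monx x v.

Lemma pow_monos (I : S -> Prop) d f : is_ideal I -> (forall f, I f -> gen_by x f) ->
  ideal_pow I d f -> Defs.span (monos d) f.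
Proof.
move=> hI hgen; elim: d f => [|d IH] f /=.
  move=> _; rewrite -[f]mulr1 -(monx_zero); apply: idMl; first exact: span_ideal.
  by apply: span_gen; exists mzero; rewrite mdeg_zero.
apply: span_sub => y [a [b [ha hb ->]]].
have [c ->] := hgen _ hb.
rewrite mulr_sumr; apply: id_sum; first exact: span_ideal.
move=> k _; rewrite mulrCA; apply: idMl; first exact: span_ideal.
apply: span_mulr (IH _ ha) => z [v [hv ->]]; apply: span_gen.
by exists (madd v (mdelta k)); rewrite mdeg_add mdeg_delta addn1 hv monx_add monx_delta.
Qed.

End MonS.
End Mon.

Section Local.
Variable S : comNzRingType.
Variable n : S -> Prop.
Hypothesis noeth : noetherian S.
Hypothesis loc : local_ring n.

Lemma gen_elem (U : S -> Prop) m (y : 'I_m -> S) i : generates U y -> U (y i).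
Proof.
move=> h; apply/h; exists (fun k => if k == i then 1 else 0).
by rewrite (bigD1 i) //= eqxx mul1r big1 ?addr0 // => k /negbTE ->; rewrite mul0r.
Qed.

Lemma nonunit_n c : ~ (exists w, w * c = 1) -> n c.
Proof.
move=> hnu.
pose K := fun a => exists s, a = s * c.
have hK : is_ideal K.
  split; first by exists 0; rewrite mul0r.
  - by move=> a b [s1 ->] [s2 ->]; exists (s1 + s2); rewrite mulrDl.
  - by move=> c0 a [s ->]; exists (c0 * s); rewrite mulrA.
have K1 : ~ K 1 by move=> [s e]; apply: hnu; exists s.
pose Pr := fun J : S -> Prop => [/\ is_ideal J, ~ J 1 & forall a, K a -> J a].
suff [m [hm hKm]] : exists m, maximal_ideal m /\ forall a, K a -> m a.
  by apply/(proj2 loc m hm); apply: hKm; exists 1; rewrite mul1r.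
apply: NNPP => Hno.
have step : forall J, Pr J -> exists J', Pr J' /\ (forall a, J a -> J' a) /\ exists a, J' a /\ ~ J a.
  move=> J [hJ J1 KJ]; apply: NNPP => hn; apply: Hno; exists J; split => //.
  split => // J0 hJ0 JJ0; case: (classic (J0 1)) => h01; [by right | left].
  move=> a; split; last exact: JJ0.
  move=> ha; apply: NNPP => hna; apply: hn; exists J0; split.
    by split => // b /KJ /JJ0.
  by split => //; exists a.
pose T := {J : S -> Prop | Pr J}.
have Fex : forall t : T, exists t' : T, (forall a, sval t a -> sval t' a) /\ exists a, sval t' a /\ ~ sval t a.
  move=> [J hJ]; have [J' [h1 h2]] := step J hJ; by exists (exist _ J' h1).
pose F := fun t => proj1_sig (constructive_indefinite_description _ (Fex t)).
have hF : forall t, (forall a, sval t a -> sval (F t) a) /\ exists a, sval (F t) a /\ ~ sval t a.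
  by move=> t; rewrite /F; case: constructive_indefinite_description.
have PrK : Pr K by split.
pose C := fun k => sval (iter k F (exist _ K PrK)).
have Cmono : forall k l, (k <= l)%N -> forall a, C k a -> C l a.
  move=> k l /subnK <-; elim: (l - k)%N => [//|d IH] a /IH h.
  by rewrite addSn /C /=; apply: (proj1 (hF _)).
pose U := fun a => exists k, C k a.
have CI : forall k, is_ideal (C k).
  by move=> k; rewrite /C; case: (iter k F _) => J [].
have hU : is_ideal U.
  split; first by exists 0%N; apply: id0.
  - move=> a b [k ha] [l hb]; exists (maxn k l); apply: idD => //.
    + by apply: (Cmono k) => //; rewrite leq_maxl.
    + by apply: (Cmono l) => //; rewrite leq_maxr.
  - by move=> c0 a [k ha]; exists k; apply: idMl.
have [m [y hy]] := noeth hU.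
pose ki := fun i : 'I_m => proj1_sig (constructive_indefinite_description _ (gen_elem i hy)).
have hki : forall i, C (ki i) (y i).
  by move=> i; rewrite /ki; case: constructive_indefinite_description.
pose K0 := (\max_(i < m) ki i)%N.
have UC : forall a, U a -> C K0 a.
  move=> a /hy [cc ->]; apply: id_sum => // i _; apply: idMl => //.
  by apply: (Cmono (ki i)) => //; apply: (leq_bigmax_cond (F := ki)).
have [a [ha1 ha2]] := proj2 (hF (iter K0 F (exist _ K PrK))).
by apply: ha2; apply: UC; exists K0.+1.
Qed.

Lemma n_ideal : is_ideal n. Proof. by case: loc => -[]. Qed.
Lemma n_not1 : ~ n 1. Proof. by case: loc => -[]. Qed.

Lemma n_unit a : n a -> exists w, w * (1 - a) = 1.
Proof.
move=> ha; apply: NNPP => h; apply: n_not1.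
by rewrite -(subrK a 1); apply: idD => //; [exact: n_ideal | exact: nonunit_n].
Qed.

Lemma notn_unit c : ~ n c -> exists w, w * c = 1.
Proof. by move=> h; apply: NNPP => h'; apply: h; exact: nonunit_n. Qed.

End Local.

Lemma nakayama (S : comNzRingType) (n : S -> Prop) (T : eqType) (N : S -> Prop) (U : seq T) (m : T -> S) :
  is_ideal n -> (forall a, n a -> exists w, w * (1 - a) = 1) ->
  is_ideal N -> uniq U -> forall a : T -> T -> S,
  (forall k l, k \in U -> l \in U -> n (a k l)) ->
  (forall k, k \in U -> N (m k - \sum_(l <- U) a k l * m l)) ->
  forall k, k \in U -> N (m k).
Proof.
move=> hn hunit hN; elim: U => [//|l0 U IH] /= /andP[l0U uU] a ha hm.
have [w hw] := hunit _ (ha l0 l0 (mem_head _ _) (mem_head _ _)).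
set X := \sum_(l <- U) a l0 l * m l.
have h0 : N (m l0 - w * X).
  have := hm l0 (mem_head _ _); rewrite big_cons -/X => h.
  have -> : m l0 - w * X = w * (m l0 - (a l0 l0 * m l0 + X)).
    have e : m l0 = w * (1 - a l0 l0) * m l0 by rewrite hw mul1r.
    rewrite [in LHS]e; ring.
  by apply: idMl.
have hU : forall k, k \in U -> N (m k).
  apply: (IH uU (fun k l => a k l + a k l0 * w * a l0 l)).
    move=> k l hk hl; apply: idD => //; first by apply: ha; rewrite inE ?hk ?hl orbT.
    by apply: idMl => //; apply: ha; rewrite ?inE ?hl ?orbT ?eqxx.
  move=> k hk; have := hm k; rewrite inE hk orbT => /(_ isT); rewrite big_cons => h.
  have -> : m k - \sum_(l <- U) (a k l + a k l0 * w * a l0 l) * m l =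
     (m k - (a k l0 * m l0 + \sum_(l <- U) a k l * m l)) + a k l0 * (m l0 - w * X).
    under eq_bigr do rewrite mulrDl.
    rewrite big_split /=.
    have -> : \sum_(i <- U) a k l0 * w * a l0 i * m i = a k l0 * w * X.
      by rewrite /X mulr_sumr; apply: eq_bigr => l _; rewrite !mulrA.
    set Y := \sum_(l <- U) a k l * m l.
    ring.
  by apply: idD => //; apply: idMl.
move=> k; rewrite inE => /orP[/eqP ->|]; last exact: hU.
apply: (id_eq hN h0); apply: idMl => //; rewrite /X; apply: id_sum_seq => // l hl.
by apply: idMl => //; apply: hU.
Qed.

Definition decb (P : Prop) : bool := if excluded_middle_informative P then true else false.
Lemma decbP (P : Prop) : decb P <-> P.
Proof. by rewrite /decb; case: excluded_middle_informative. Qed.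

Section Core.
Variable S : comNzRingType.
Variables n I : S -> Prop.
Variable r : nat.
Variable x : 'I_r -> S.
Hypothesis hn : is_ideal n.
Hypothesis hunit : forall a, n a -> exists w, w * (1 - a) = 1.
Hypothesis hnotn : forall c, ~ n c -> exists w, w * c = 1.
Hypothesis hI : is_ideal I.
Hypothesis hx : forall k, I (x k).
Hypothesis hgen : forall f, I f -> gen_by x f.
Implicit Types u v w : mon r.

Definition Wgen u (y : S) :=
  (exists v, [/\ mdeg v = mdeg u, ltlex v u & y = monx x v]) \/
  (exists a v, [/\ n a, mdeg v = mdeg u & y = a * monx x v]) \/
  ideal_pow I (mdeg u).+1 y.
Definition W u := dspan (Wgen u).
Definition G : pred (mon r) := fun u => decb (~ W u (monx x u)).
Lemma GP u : G u <-> ~ W u (monx x u).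
Proof. exact: decbP. Qed.

Definition Dl d := [seq u <- mons_below r d.+1 | (d <= mdeg u < d.+1)%N].
Definition Ul d := [seq u <- mons_below r d.+1 | G u && (d <= mdeg u < d.+1)%N].

Lemma deg_range d k : (d <= k < d.+1)%N = (k == d).
Proof. by rewrite ltnS -eqn_leq eq_sym. Qed.

Lemma mem_Dl d u : (u \in Dl d) = (mdeg u == d).
Proof.
rewrite mem_filter deg_range; case: eqP => //= h.
by apply: mem_mons_deg; rewrite h.
Qed.
Lemma mem_Ul d u : (u \in Ul d) = G u && (mdeg u == d).
Proof.
rewrite mem_filter deg_range; case: eqP; rewrite ?andbF //= andbT => h.
by rewrite mem_mons_deg ?andbT // h.
Qed.
Lemma uniq_Dl d : uniq (Dl d). Proof. exact/filter_uniq/uniq_mons_below. Qed.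
Lemma uniq_Ul d : uniq (Ul d). Proof. exact/filter_uniq/uniq_mons_below. Qed.

Lemma W_ideal u : is_ideal (W u). Proof. exact: span_ideal. Qed.

Lemma G_standard : standard_set G.
Proof.
move=> u v hvu /GP hu; apply/GP => hv; apply: hu.
rewrite -(madd_sub hvu) monx_add.
apply: span_mulr hv => y [[v' [hd hl ->]]|[[a [v' [ha hd ->]]]|hy]].
- apply: span_gen; left; exists (madd v' (msub u v)).
  by rewrite -monx_add !mdeg_add hd; split => //; apply: ltlex_add.
- apply: span_gen; right; left; exists a, (madd v' (msub u v)).
  by rewrite -mulrA -monx_add !mdeg_add hd.
- apply: span_gen; right; right; rewrite mdeg_add -addSn.
  by apply: pow_mul => //; apply: monx_pow.
Qed.

Definition WFgen d (y : S) :=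
  (exists v, [/\ G v, mdeg v = d & y = monx x v]) \/
  ((exists a v, [/\ n a, mdeg v = d & y = a * monx x v]) \/
  ideal_pow I d.+1 y).

Lemma WF_all d u : mdeg u = d -> dspan (WFgen d) (monx x u).
Proof.
move=> hu; have : u \in Dl d by rewrite mem_Dl hu.
move: u {hu}; apply: (list_ind (lt := @ltlex r)).
- exact: ltlex_trans.
- exact: ltlex_irr.
move=> u; rewrite mem_Dl => /eqP hu IH.
case: (classic (G u)) => hG.
  by apply: span_gen; left; exists u.
have : W u (monx x u) by apply: NNPP => h; apply: hG; apply/GP.
apply: span_sub => y [[v [hd hl ->]]|[[a [v [ha hd ->]]]|hy]].
- by apply: IH => //; rewrite mem_Dl hd hu.
- by apply: span_gen; right; left; exists a, v; rewrite hd hu.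
- by apply: span_gen; right; right; rewrite -hu.
Qed.

Definition Nd d (f : S) := exists c, ideal_pow I d.+1 (f - \sum_(v <- Ul d) c v * monx x v).

Lemma Nd_ideal d : is_ideal (Nd d).
Proof.
split.
- exists (fun _ => 0); rewrite big1 ?subr0; first exact: id0 (pow_ideal _ _).
  by move=> v _; rewrite mul0r.
- move=> a b [c1 h1] [c2 h2]; exists (fun v => c1 v + c2 v).
  under eq_bigr do rewrite mulrDl.
  rewrite big_split /= opprD addrACA; exact: idD (pow_ideal _ _) h1 h2.
- move=> c0 a [c1 h1]; exists (fun v => c0 * c1 v).
  have -> : c0 * a - \sum_(v <- Ul d) c0 * c1 v * monx x v =
    c0 * (a - \sum_(v <- Ul d) c1 v * monx x v).
    by rewrite mulrBr mulr_sumr; congr (_ - _); apply: eq_bigr => v _; rewrite mulrA.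
  exact: idMl (pow_ideal _ _) h1.
Qed.

Lemma gen_G d f : ideal_pow I d f -> Nd d f.
Proof.
move=> hf.
have hm : forall u, u \in Dl d -> exists a : mon r -> S, (forall v, n (a v)) /\
    Nd d (monx x u - \sum_(v <- Dl d) a v * monx x v).
  move=> u; rewrite mem_Dl => /eqP hu.
  have [f1 [f' [h1 h' e]]] := span_union (WF_all hu).
  have [f2 [f3 [h2 h3 e']]] := span_union h'.
  have [a [ha e2]] : exists a, (forall v, n (a v)) /\ f2 = \sum_(v <- Dl d) a v * monx x v.
    apply: (span_seq hn (uniq_Dl d) _ h2) => y [a [v [ha hv ->]]].
    by exists a, v; rewrite mem_Dl hv.
  have NG : forall v, G v -> mdeg v = d -> Nd d (monx x v).
    move=> v hG hv; exists (fun j => if j == v then 1 else 0).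
    rewrite sum_delta ?uniq_Ul ?mem_Ul ?hG ?hv ?eqxx // mul1r subrr.
    exact: id0 (pow_ideal _ _).
  have NI : forall y, ideal_pow I d.+1 y -> Nd d y.
    move=> y hy; exists (fun _ => 0); rewrite big1 ?subr0 // => v _; exact: mul0r.
  exists a; split => //; rewrite e e' -e2.
  have -> : f1 + (f2 + f3) - f2 = f1 + f3 by ring.
  apply: idD; first exact: Nd_ideal.
  - by apply: (span_ind (Nd_ideal d) _ h1) => y [v [hG hv ->]]; apply: NG.
  - by apply: NI; apply: span_idem h3; apply: pow_ideal.
have [A hA] := fchoice (fun _ : mon r => 0 : S) hm.
have hN := nakayama hn hunit (Nd_ideal d) (uniq_Dl d) (a := A) (m := monx x)
  (fun k l hk _ => proj1 (hA k hk) l) (fun k hk => proj2 (hA k hk)).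
apply: (span_ind (Nd_ideal d) _ (pow_monos hI hgen hf)) => y [v [hv ->]].
by apply: hN; rewrite mem_Dl hv.
Qed.



Lemma kindep d (q : mon r -> S) :
  dspan (fun y => (exists a v, [/\ n a, mdeg v = d & y = a * monx x v]) \/ ideal_pow I d.+1 y)
    (\sum_(v <- Ul d) q v * monx x v) -> forall u, u \in Ul d -> n (q u).
Proof.
move=> hs; apply: (list_ind (lt := fun a b => ltlex b a)).
- by move=> a b c h1 h2; apply: ltlex_trans h2 h1.
- exact: ltlex_irr.
move=> u hu IH; apply: NNPP => hq.
have [w hw] := hnotn hq.
have e : q u * monx x u = \sum_(v <- Ul d) q v * monx x v - \sum_(v <- rem u (Ul d)) q v * monx x v.
  by rewrite (big_rem u) //= addrK.
move: (hu); rewrite mem_Ul => /andP[/GP hG /eqP hd]; apply: hG.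
have -> : monx x u = w * (q u * monx x u) by rewrite mulrA hw mul1r.
apply: idMl; first exact: W_ideal.
rewrite e; apply: idB; first exact: W_ideal.
- apply: span_sub hs => y [[a [v [ha hv ->]]]|hy]; apply: span_gen; right.
  + by left; exists a, v; rewrite hv hd.
  + by right; rewrite hd.
- apply: id_sum_seq; first exact: W_ideal.
  move=> v hv.
  have hvU : v \in Ul d by apply: mem_rem hv.
  have hvu : v != u by move: hv; rewrite mem_rem_uniq ?uniq_Ul // inE => /andP[].
  have hdv : mdeg v = d by move: hvU; rewrite mem_Ul => /andP[_ /eqP].
  case/orP: (ltlex_total hvu) => hl.
  + apply: idMl; first exact: W_ideal.
    by apply: span_gen; left; exists v; split => //; rewrite hdv hd.
  + apply: span_gen; right; left; exists (q v), v; split => //; last by rewrite hdv hd.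
    exact: IH.
Qed.

Lemma indep d (J : eqType) (e : J -> S) : quot_basis I d (@predT J) e ->
  forall (s : seq (mon r)) (c : mon r -> S), uniq s -> all [pred u | G u && (mdeg u == d)] s ->
  ideal_pow I d.+1 (\sum_(j <- s) c j * monx x j) -> forall j, j \in s -> I (c j).
Proof.
move=> [he1 he2 he3] s c us hs hsum.
have uU := uniq_Ul d.
have sU : {subset s <= Ul d} by move=> j hj; rewrite mem_Ul; exact: (allP hs j hj).
have pU : forall u, u \in Ul d -> ideal_pow I d (monx x u).
  move=> u; rewrite mem_Ul => /andP[_ /eqP <-]; exact: monx_pow.
have h1 : forall u, u \in Ul d -> exists p : seq J * (J -> S),
    ideal_pow I d.+1 (monx x u - \sum_(j <- p.1) p.2 j * e j).
  move=> u hu; have [s0 [c0 [_ h]]] := he2 _ (pU u hu); by exists (s0, c0).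
have [fp hfp] := fchoice (([::] : seq J), fun _ : J => 0 : S) h1.
set T := undup (flatten [seq (fp u).1 | u <- Ul d]).
have uT : uniq T := undup_uniq _.
have h2 : forall u, u \in Ul d -> exists al : J -> S,
    ideal_pow I d.+1 (monx x u - \sum_(j <- T) al j * e j).
  move=> u hu.
  have [al [_ eal]] := @sum_extend _ _ _ e (fp u).1 (fp u).2 T (idT S) uT
    (fun j hj => ltac:(rewrite mem_undup; apply/flattenP; exists (fp u).1 => //; exact: map_f))
    (fun _ _ => Logic.I).
  by exists al; rewrite -eal; exact: hfp u hu.
have [al hal] := fchoice (fun _ : J => 0 : S) h2.
have h3 : forall b, b \in T -> exists bv : mon r -> S,
    ideal_pow I d.+1 (e b - \sum_(v <- Ul d) bv v * monx x v).
  by move=> b _; apply: gen_G; apply: he1.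
have [bb hbb] := fchoice (fun _ : mon r => 0 : S) h3.
pose P u v := \sum_(b <- T) al u b * bb b v.
have eP : forall u, \sum_(v <- Ul d) P u v * monx x v =
    \sum_(b <- T) al u b * \sum_(v <- Ul d) bb b v * monx x v.
  move=> u; rewrite /P.
  under eq_bigr do rewrite mulr_suml.
  rewrite exchange_big /=; apply: eq_bigr => b _; rewrite mulr_sumr.
  by apply: eq_bigr => v _; rewrite mulrA.
have hP : forall u, u \in Ul d -> ideal_pow I d.+1 (monx x u - \sum_(v <- Ul d) P u v * monx x v).
  move=> u hu; rewrite eP.
  have -> : monx x u - \sum_(b <- T) al u b * \sum_(v <- Ul d) bb b v * monx x v =
     (monx x u - \sum_(b <- T) al u b * e b) +
     \sum_(b <- T) al u b * (e b - \sum_(v <- Ul d) bb b v * monx x v).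
    rewrite [X in _ = _ + X](eq_bigr (fun b => al u b * e b - al u b * \sum_(v <- Ul d) bb b v * monx x v)).
      by rewrite sumrB addrA subrK.
    by move=> b _; rewrite mulrBr.
  apply: idD; first exact: pow_ideal.
    exact: hal.
  apply: id_sum_seq; first exact: pow_ideal.
  by move=> b hb; apply: idMl; [exact: pow_ideal | exact: hbb].
have hPn : forall u v, u \in Ul d -> v \in Ul d -> n ((if v == u then 1 else 0) - P u v).
  move=> u v hu hv.
  apply: (@kindep d (fun v => (if v == u then 1 else 0) - P u v) _ v hv).
  apply: span_gen; right.
  under eq_bigr do rewrite mulrBl.
  by rewrite sumrB (sum_delta _ _ uU hu) mul1r; apply: hP.
pose c' u := if u \in s then c u else 0.
have ec' : \sum_(u <- Ul d) c' u * monx x u = \sum_(j <- s) c j * monx x j.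
  by rewrite /c' sum_restrict.
have hg : forall b, b \in T -> I (\sum_(u <- Ul d) c' u * al u b).
  move=> b hb; apply: (he3 T (fun b => \sum_(u <- Ul d) c' u * al u b) uT) => //.
    by apply/allP.
  have -> : \sum_(b <- T) (\sum_(u <- Ul d) c' u * al u b) * e b =
      \sum_(u <- Ul d) c' u * monx x u - \sum_(u <- Ul d) c' u * (monx x u - \sum_(b <- T) al u b * e b).
    under [X in _ = _ - X]eq_bigr do rewrite mulrBr.
    rewrite sumrB opprB addrC subrK.
    under eq_bigr do rewrite mulr_suml.
    rewrite exchange_big /=; apply: eq_bigr => u _; rewrite mulr_sumr.
    by apply: eq_bigr => b0 _; rewrite mulrA.
  apply: idB; first exact: pow_ideal.
    by rewrite ec'.
  apply: id_sum_seq; first exact: pow_ideal.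
  by move=> u hu; apply: idMl; [exact: pow_ideal | exact: hal].
have hN := nakayama hn hunit hI uU (m := c')
  (a := fun v u => (if u == v then 1 else 0) - P u v)
  (fun k l hk hl => ltac:(cbv beta; rewrite eq_sym; exact: hPn l k hl hk)).
move=> j hj; suff : I (c' j) by rewrite /c' hj.
apply: hN (sU j hj) => v hv.
have -> : c' v - \sum_(u <- Ul d) ((if u == v then 1 else 0) - P u v) * c' u =
    \sum_(b <- T) (\sum_(u <- Ul d) c' u * al u b) * bb b v.
  under eq_bigr do rewrite mulrBl.
  rewrite sumrB sum_delta // mul1r opprB addrC subrK /P.
  under eq_bigr do rewrite mulr_suml.
  rewrite exchange_big /=; apply: eq_bigr => b _; rewrite mulr_suml.
  by apply: eq_bigr => u0 _; rewrite mulrC mulrA.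
apply: id_sum_seq => // b hb; apply: idMr => //; exact: hg.
Qed.

Lemma cond2_core : (forall i, quot_free I i) ->
  standard_set G /\ forall i, quot_basis I i [pred u | G u && (mdeg u == i)] (monx x).
Proof.
move=> hfree; split; first exact: G_standard.
move=> i; split.
- move=> u /andP[_ /eqP <-]; exact: monx_pow.
- move=> f hf; have [c hc] := gen_G hf; exists (Ul i), c; split => //.
  by apply/allP => u; rewrite mem_Ul.
- have [J [e he]] := hfree i; exact: indep he.
Qed.

End Core.

Section Lift.
Variable S : comNzRingType.
Variable I : S -> Prop.
Hypothesis hI : is_ideal I.

Lemma lift_fun L : lifting_image I L -> exists sg : S -> S, forall a, L (sg a) /\ I (a - sg a).
Proof.
move=> [_ hL].
have h : forall a, exists b, L b /\ I (a - b).
  by move=> a; have [b [h1 h2 _]] := hL a; exists b.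
exists (fun a => proj1_sig (constructive_indefinite_description _ (h a))).
by move=> a; case: constructive_indefinite_description.
Qed.

Lemma lift_uniq L b b' : lifting_image I L -> L b -> L b' -> I (b - b') -> b = b'.
Proof.
move=> [_ hL] hb hb' hbb; have [b0 [_ _ hu]] := hL b.
rewrite (hu b hb) ?subrr; last exact: id0.
by rewrite (hu b' hb').
Qed.

Definition cosI (a : S) := fun b => I (a - b).
Lemma cos_eq a a' : I (a - a') -> cosI a = cosI a'.
Proof.
move=> h; extensionality b; apply: propositional_extensionality.
rewrite /cosI; split => hb.
- by rewrite -(subrKA a); apply: idD => //; apply: idBC.
- by rewrite -(subrKA a'); apply: idD.
Qed.

Definition sgI (a : S) : S :=
  if decb (I a) then 0 else epsilon (inhabits (0 : S)) (cosI a).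

Lemma sgI_spec a : I (a - sgI a).
Proof.
rewrite /sgI /decb; case: excluded_middle_informative => h; first by rewrite subr0.
apply: (epsilon_spec (inhabits (0:S)) (cosI a)); exists a; rewrite /cosI subrr; exact: id0.
Qed.

Lemma sgI_congr a a' : I (a - a') -> sgI a = sgI a'.
Proof.
move=> h; rewrite /sgI (cos_eq h).
have e : I a <-> I a'.
  split => ha; first by rewrite -(subrK a a') -opprB; apply: idD => //; apply: idN.
  by rewrite -(subrK a' a); apply: idD.
rewrite /decb; case: excluded_middle_informative => h1; case: excluded_middle_informative => h2 //; [by case: h2; apply/e | by case: h1; apply/e].
Qed.

Lemma lift_exists : exists L, lifting_image I L.
Proof.
exists (fun b => sgI b = b); split.
  by rewrite /sgI /decb; case: excluded_middle_informative => // h; case: h; exact: id0.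
move=> a; exists (sgI a); split.
- by apply: sgI_congr; apply: idBC => //; apply: sgI_spec.
- exact: sgI_spec.
- move=> b' hb' hab; rewrite -hb'; apply: sgI_congr; exact: idBC.
Qed.

End Lift.

Lemma sum_pmap (S : comNzRingType) (T : eqType) (P : pred T) (sT : subType P) (s : seq T) (F : T -> S) :
  all P s -> \sum_(j <- pmap (insub : T -> option sT) s) F (val j) = \sum_(u <- s) F u.
Proof.
move=> hs; rewrite -(big_map val xpredT F) (pmap_filter (insubK _)).
by rewrite (eq_filter (isSome_insub _)) (all_filterP hs).
Qed.

Section Exp.
Variable S : comNzRingType.
Variable I : S -> Prop.
Variable r : nat.
Variable x : 'I_r -> S.
Variable G : pred (mon r).
Hypothesis hI : is_ideal I.
Hypothesis hx : forall k, I (x k).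
Implicit Types u v : mon r.

Lemma powI_mul i a b : I a -> ideal_pow I i b -> ideal_pow I i.+1 (a * b).
Proof. by move=> ha hb; rewrite -add1n; apply: pow_mul => //; apply/pow1. Qed.

Lemma trunc_N i j N c : (j <= N)%N ->
  trunc_sum x G i j c = \sum_(u <- mons_below r N | G u && (i <= mdeg u < j)%N) c u * monx x u.
Proof.
move=> hjN; rewrite /trunc_sum -big_filter -[RHS]big_filter; apply: perm_big.
apply: uniq_perm; try exact/filter_uniq/uniq_mons_below.
move=> u; rewrite !mem_filter; case: (boolP (G u && _)) => //= /andP[_ /andP[_ h]].
by rewrite !mem_mons_deg // (leq_trans h hjN).
Qed.

Lemma trunc_split i j k c : (i <= j)%N -> (j <= k)%N ->
  trunc_sum x G i k c = trunc_sum x G i j c + trunc_sum x G j k c.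
Proof.
move=> hij hjk; rewrite (@trunc_N i k k c (leqnn k)) (@trunc_N i j k c hjk) (@trunc_N j k k c (leqnn k)).
rewrite (bigID (fun u => mdeg u < j)%N) /=; congr (_ + _); apply: eq_bigl => u.
- by case: (G u) => //=; lia.
- by case: (G u) => //=; lia.
Qed.

Lemma trunc_eq i j c c' : (forall u, G u -> (i <= mdeg u < j)%N -> c u = c' u) ->
  trunc_sum x G i j c = trunc_sum x G i j c'.
Proof. by move=> h; apply: eq_bigr => u /andP[h1 h2]; rewrite h. Qed.

Lemma trunc_pow i j c : ideal_pow I i (trunc_sum x G i j c).
Proof.
apply: id_sum; first exact: pow_ideal.
move=> u /andP[_ /andP[h _]]; apply: idMl; first exact: pow_ideal.
by apply: (pow_le h); apply: monx_pow.
Qed.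

Lemma trunc0 i j : trunc_sum x G i j (fun _ => 0) = 0.
Proof. by rewrite /trunc_sum big1 // => u _; rewrite mul0r. Qed.

Definition Ug d := [seq u <- mons_below r d.+1 | G u && (d <= mdeg u < d.+1)%N].
Lemma mem_Ug d u : (u \in Ug d) = G u && (mdeg u == d).
Proof.
rewrite mem_filter deg_range; case: eqP; rewrite ?andbF //= andbT => h.
by rewrite mem_mons_deg ?andbT // h.
Qed.
Lemma uniq_Ug d : uniq (Ug d). Proof. exact/filter_uniq/uniq_mons_below. Qed.
Lemma trunc_Ug i c : trunc_sum x G i i.+1 c = \sum_(u <- Ug i) c u * monx x u.
Proof. by rewrite /trunc_sum big_filter. Qed.

Definition Ag i := [pred u | G u && (mdeg u == i)].

Lemma basis_exp i : quot_basis I i (Ag i) (monx x) -> expandable I x G i i.+1.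
Proof.
move=> [hb1 hb2 hb3] L hL f hf; have [sg hsg] := lift_fun hL; split.
- have [s [c0 [hs hr]]] := hb2 f hf.
  have [c1 [_ e1]] := @sum_extend _ _ _ (monx x) s c0 (Ug i) (idT S) (uniq_Ug i)
    (fun u hu => ltac:(rewrite mem_Ug; exact: (allP hs u hu))) (fun _ _ => Logic.I).
  exists (fun u => sg (c1 u)); split; first by move=> u _ _; apply: (proj1 (hsg _)).
  rewrite trunc_Ug.
  have -> : f - \sum_(u <- Ug i) sg (c1 u) * monx x u =
    (f - \sum_(j <- s) c0 j * monx x j) + \sum_(u <- Ug i) (c1 u - sg (c1 u)) * monx x u.
    rewrite e1; under [X in _ = _ + X]eq_bigr do rewrite mulrBl.
    by rewrite sumrB addrA subrK.
  apply: idD hr _; first exact: pow_ideal.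
  apply: id_sum_seq; first exact: pow_ideal.
  move=> u hu; apply: powI_mul; first exact: (proj2 (hsg _)).
  by apply: hb1; move: hu; rewrite mem_Ug.
- move=> c c' hc hc' h h' u hG hd.
  have hu : u \in Ug i by rewrite mem_Ug hG -deg_range hd.
  apply: (lift_uniq hI hL); [exact: hc | exact: hc' |].
  apply: (hb3 (Ug i) (fun u => c u - c' u) (uniq_Ug i)) => //.
    by apply/allP => v; rewrite mem_Ug.
  have -> : \sum_(j <- Ug i) (c j - c' j) * monx x j =
      (f - trunc_sum x G i i.+1 c') - (f - trunc_sum x G i i.+1 c).
    rewrite !trunc_Ug; under eq_bigr do rewrite mulrBl.
    by rewrite sumrB; ring.
  by apply: idB => //; exact: pow_ideal.
Qed.

Lemma exp_basis i : expandable I x G i i.+1 -> quot_basis I i (Ag i) (monx x).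
Proof.
move=> he; have [L hL] := lift_exists hI; have [sg hsg] := lift_fun hL.
split.
- by move=> u /andP[_ /eqP <-]; apply: monx_pow.
- move=> f hf; have [[c [_ hc]] _] := he L hL f hf.
  exists (Ug i), c; split; first by apply/allP => u; rewrite mem_Ug.
  by rewrite -trunc_Ug.
- move=> s c us hs hsum j hj.
  have sU : {subset s <= Ug i} by move=> u hu; rewrite mem_Ug; exact: (allP hs u hu).
  pose c' u := if u \in s then c u else 0.
  pose ct u := sg (c' u).
  have hf : ideal_pow I i (trunc_sum x G i i.+1 ct) by apply: trunc_pow.
  have [_ hun] := he L hL _ hf.
  have hjU := sU j hj; move: (hjU); rewrite mem_Ug => /andP[hG /eqP hd].
  have h2 : ideal_pow I i.+1 (trunc_sum x G i i.+1 ct - trunc_sum x G i i.+1 (fun _ => 0)).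
    rewrite trunc0 subr0 trunc_Ug.
    have -> : \sum_(u <- Ug i) ct u * monx x u =
        \sum_(u <- Ug i) c' u * monx x u - \sum_(u <- Ug i) (c' u - ct u) * monx x u.
      under [X in _ = _ - X]eq_bigr do rewrite mulrBl.
      by rewrite sumrB opprB addrC subrK.
    rewrite /c' sum_restrict //; try exact: uniq_Ug.
    apply: idB hsum _; first exact: pow_ideal.
    apply: id_sum_seq; first exact: pow_ideal.
    move=> u hu; apply: powI_mul; first exact: (proj2 (hsg _)).
    by move: hu; rewrite mem_Ug => /andP[_ /eqP <-]; apply: monx_pow.
  have h1 : ideal_pow I i.+1 (trunc_sum x G i i.+1 ct - trunc_sum x G i i.+1 ct).
    by rewrite subrr; exact: id0 (pow_ideal _ _).
  have e0 := hun ct (fun _ => 0) (fun u _ _ => proj1 (hsg _)) (fun _ _ _ => proj1 hL) h1 h2 j hG.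
  have {}e0 : ct j = 0 by apply: e0; rewrite deg_range hd.
  have := proj2 (hsg (c' j)); rewrite -/(ct j) e0 subr0 /c' hj; exact.
Qed.



Lemma trunc_rem i j k c f : (i <= j)%N -> (j <= k)%N -> ideal_pow I k (f - trunc_sum x G i k c) ->
  ideal_pow I j (f - trunc_sum x G i j c).
Proof.
move=> hij hjk h; rewrite (@trunc_split i j k c hij hjk) opprD addrA in h.
rewrite -(subrK (trunc_sum x G j k c) (f - _)).
apply: idD; first exact: pow_ideal.
  exact: pow_le h.
exact: trunc_pow.
Qed.

Lemma exp_trans i j : (i < j)%N -> expandable I x G i j -> expandable I x G j j.+1 ->
  expandable I x G i j.+1.
Proof.
move=> hij E1 E2 L hL f hf; split.
- have [[c [hc hr]] _] := E1 L hL f hf.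
  have [[c2 [hc2 hr2]] _] := E2 L hL _ hr.
  pose c3 u := if (mdeg u < j)%N then c u else c2 u.
  exists c3; split.
    move=> u hG hu; rewrite /c3; case: ltnP => h.
    + by apply: hc => //; lia.
    + by apply: hc2 => //; lia.
  have e1 : trunc_sum x G i j c3 = trunc_sum x G i j c.
    by apply: trunc_eq => u _ /andP[_ h]; rewrite /c3 h.
  have e2 : trunc_sum x G j j.+1 c3 = trunc_sum x G j j.+1 c2.
    by apply: trunc_eq => u _ /andP[h _]; rewrite /c3 ltnNge h.
  by rewrite (@trunc_split i j j.+1 c3 (ltnW hij) (leqnSn j)) e1 e2 opprD addrA.
- move=> c c' hc hc' h h' u hG hu.
  have hw : forall c0, coefs_in G L i j.+1 c0 -> coefs_in G L i j c0.
    by move=> c0 hc0 v hv hvd; apply: hc0 => //; lia.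
  have hr := @trunc_rem i j j.+1 c f (ltnW hij) (leqnSn j) h.
  have hr' := @trunc_rem i j j.+1 c' f (ltnW hij) (leqnSn j) h'.
  have [_ U1] := E1 L hL f hf.
  have eq1 := U1 c c' (hw _ hc) (hw _ hc') hr hr'.
  case: (ltnP (mdeg u) j) => hdj; first by apply: eq1 => //; lia.
  have et : trunc_sum x G i j c = trunc_sum x G i j c' by apply: trunc_eq.
  have [_ U2] := E2 L hL _ hr.
  apply: (U2 c c') => //; try lia.
  + by move=> v hv hvd; apply: hc => //; lia.
  + by move=> v hv hvd; apply: hc' => //; lia.
  + by rewrite -addrA -opprD -(@trunc_split i j j.+1 c (ltnW hij) (leqnSn j)).
  + by rewrite et -addrA -opprD -(@trunc_split i j j.+1 c' (ltnW hij) (leqnSn j)).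
Qed.

Lemma exp_chain : (forall i, expandable I x G i i.+1) -> forall i j, (i < j)%N -> expandable I x G i j.
Proof.
move=> E i j hij; rewrite -(subnK hij); elim: (j - i.+1)%N => [|k IH]; first exact: E.
rewrite addSn; apply: exp_trans => //; lia.
Qed.


Lemma series_trunc i c f : series_rep I x G i c f -> forall j, (i <= j)%N ->
  ideal_pow I j (f - trunc_sum x G i j c).
Proof.
move=> hs j hij; have [N1 hN1] := hs j.
have hp := hN1 (maxn N1 j) (leq_maxl _ _).
rewrite (@trunc_split i j (maxn N1 j) c hij (leq_maxr _ _)) in hp.
have -> : f - trunc_sum x G i j c =
    trunc_sum x G j (maxn N1 j) c - (trunc_sum x G i j c + trunc_sum x G j (maxn N1 j) c - f).
  by ring.
by apply: idB; [exact: pow_ideal | exact: trunc_pow | exact: hp].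
Qed.

Lemma exp_inf : (forall i j, (i < j)%N -> expandable I x G i j) -> forall i, expandable_inf I x G i.
Proof.
move=> E i L hL f hf; split.
- have hex : forall N, exists cN, (i < N)%N ->
      coefs_in G L i N cN /\ ideal_pow I N (f - trunc_sum x G i N cN).
    move=> N; case: (ltnP i N) => h.
      by have [[c hc] _] := E i N h L hL f hf; exists c.
    by exists (fun _ => 0).
  pose CC N := proj1_sig (constructive_indefinite_description _ (hex N)).
  have hCC : forall N, (i < N)%N ->
      coefs_in G L i N (CC N) /\ ideal_pow I N (f - trunc_sum x G i N (CC N)).
    by move=> N; rewrite /CC; case: constructive_indefinite_description.
  have cons : forall N M, (i < N)%N -> (N <= M)%N -> forall u, G u ->
      (i <= mdeg u < N)%N -> CC N u = CC M u.
    move=> N M hN hNM u hG hu; have [_ U] := E i N hN L hL f hf.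
    have [hcM hrM] := hCC M (leq_trans hN hNM).
    apply: (U (CC N) (CC M)) => //.
    + exact: (proj1 (hCC N hN)).
    + by move=> v hv hvd; apply: hcM => //; lia.
    + exact: (proj2 (hCC N hN)).
    + exact: trunc_rem (ltnW hN) hNM hrM.
  exists (fun u => CC (mdeg u).+1 u); split.
    by move=> u hG hd; apply: (proj1 (hCC _ _)) => //; lia.
  move=> k; exists (maxn k i.+1) => p hp.
  have hip : (i < p)%N by lia.
  rewrite (@trunc_eq i p _ (CC p)); last by move=> u hG hu; apply: cons => //; lia.
  apply: idBC; first exact: pow_ideal.
  apply: (pow_le _ (proj2 (hCC p hip))); lia.
- move=> c c' hc hc' hs hs' u hG hd.
  have [_ U] := E i (mdeg u).+1 hd L hL f hf.
  apply: (U c c') => //.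
  + by move=> v hv hvd; apply: hc => //; lia.
  + by move=> v hv hvd; apply: hc' => //; lia.
  + by apply: series_trunc => //; lia.
  + by apply: series_trunc => //; lia.
  + by rewrite hd ltnSn.
Qed.

Lemma series_ext i L c f : lifting_image I L -> expandable_inf I x G i.+1 ->
  coefs_in G L i i.+1 c -> ideal_pow I i.+1 (f - trunc_sum x G i i.+1 c) ->
  exists c3, [/\ forall u, G u -> (i <= mdeg u)%N -> L (c3 u),
    series_rep I x G i c3 f & forall u, mdeg u = i -> c3 u = c u].
Proof.
move=> hL Einf hc hr.
have [[c1 [hc1 hs1]] _] := Einf L hL _ hr.
pose c3 u := if mdeg u == i then c u else c1 u.
exists c3; split.
- move=> u hG hd; rewrite /c3; case: eqP => h.
  + by apply: hc => //; lia.
  + by apply: hc1 => //; lia.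
- move=> k; have [N1 h1] := hs1 k; exists (maxn N1 i.+1) => p hp.
  have e1 : trunc_sum x G i i.+1 c3 = trunc_sum x G i i.+1 c.
    by apply: trunc_eq => u _ hu; rewrite /c3 -deg_range hu.
  have e2 : trunc_sum x G i.+1 p c3 = trunc_sum x G i.+1 p c1.
    by apply: trunc_eq => u _ hu; rewrite /c3; case: eqP => // h; lia.
  rewrite (@trunc_split i i.+1 p c3 (leqnSn i) (leq_trans (leq_maxr _ _) hp)) e1 e2.
  have -> : trunc_sum x G i i.+1 c + trunc_sum x G i.+1 p c1 - f =
      trunc_sum x G i.+1 p c1 - (f - trunc_sum x G i i.+1 c) by ring.
  by apply: h1; exact: leq_trans (leq_maxl _ _) hp.
- by move=> u hu; rewrite /c3 hu eqxx.
Qed.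

Lemma inf_exp : (forall i, expandable_inf I x G i) -> forall i, expandable I x G i i.+1.
Proof.
move=> Einf i L hL f hf; have [[c [hc hs]] U] := Einf i L hL f hf; split.
- exists c; split; first by move=> u hG hu; apply: hc => //; lia.
  exact: series_trunc.
- move=> d d' hcc hcc' h h' u hG hu.
  have [c3 [h31 h32 h33]] := series_ext hL (Einf i.+1) hcc h.
  have [c3' [h31' h32' h33']] := series_ext hL (Einf i.+1) hcc' h'.
  have hd : mdeg u = i by move: hu; rewrite deg_range => /eqP.
  rewrite -h33 // -h33' //; apply: (U c3 c3') => //; lia.
Qed.

Lemma basis_free i : quot_basis I i (Ag i) (monx x) -> quot_free I i.
Proof.
move=> [hb1 hb2 hb3].
exists {u : mon r | Ag i u}, (fun j => monx x (sval j)); split.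
- by move=> j _; apply: hb1; exact: (svalP j).
- move=> f hf; have [s [c [hs hr]]] := hb2 f hf.
  exists (pmap insub s), (fun j => c (sval j)); split; first by apply/allP.
  rewrite (sum_pmap _ (fun u => c u * monx x u) hs).
  exact: hr.
- move=> s c us hs hsum j hj.
  pose c' (u : mon r) := if insub u is Some j0 then c j0 else 0.
  have e : forall j0 : {u : mon r | Ag i u}, c' (sval j0) = c j0 by move=> j0; rewrite /c' valK.
  rewrite -e; apply: (hb3 (map (fun j0 => sval j0) s) c').
  + by rewrite map_inj_uniq //; exact: val_inj.
  + by apply/allP => u /mapP [j0 _ ->]; exact: (svalP j0).
  + by rewrite big_map; under eq_bigr do rewrite e.
  + exact: map_f.
Qed.


End Exp.

Lemma ex_min (P : nat -> Prop) : (exists r, P r) -> exists r, P r /\ forall r', P r' -> (r <= r')%N.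
Proof.
move=> [r0 h0].
suff H : forall N r, (r <= N)%N -> P r -> exists r, P r /\ forall r', P r' -> (r <= r')%N.
  exact: H h0.
move=> N; elim: N => [|N IH] r hr hP.
  by exists r; split => // r' _; move: hr; rewrite leqn0 => /eqP ->.
case: (classic (exists r', P r' /\ (r' < r)%N)) => [[r' [h1 h2]]|hno].
  by apply: (IH r') => //; lia.
exists r; split => // r' hr'; rewrite leqNgt; apply/negP => hlt; apply: hno; exists r'; split.
- exact: hr'.
- exact: hlt.
Qed.

Section Final.
Variable S : comNzRingType.
Variables n I : S -> Prop.
Hypothesis noeth : noetherian S.
Hypothesis loc : local_ring n.
Hypothesis hI : is_ideal I.

Lemma min_exists : exists r (x : 'I_r -> S), min_gen_seq I x.
Proof.
have [r [hr hmin]] := ex_min (P := fun r => exists x : 'I_r -> S, generates I x) (noeth hI).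
have [x hx] := hr; exists r, x; split => // r' x' h; apply: hmin; by exists x'.
Qed.

Lemma mgs_x r (x : 'I_r -> S) : min_gen_seq I x -> forall k, I (x k).
Proof. by move=> [h _] k; apply: gen_elem h. Qed.
Lemma mgs_gen r (x : 'I_r -> S) : min_gen_seq I x -> forall f, I f -> gen_by x f.
Proof. by move=> [h _] f /h. Qed.

Lemma s1_2 : strongly_Lech_independent I -> cond2 I.
Proof.
move=> hS r x hx; exists (G n I x).
apply: cond2_core => //.
- exact: n_ideal loc.
- exact: n_unit noeth loc.
- exact: notn_unit noeth loc.
- exact: mgs_x hx.
- exact: mgs_gen hx.
Qed.

Lemma s2_1 : cond2 I -> strongly_Lech_independent I.
Proof.
move=> h2 i; have [r [x hx]] := min_exists.
have [G [_ hG]] := h2 r x hx; exact: (@basis_free S I r x G i (hG i)).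
Qed.

Lemma s2_3 : cond2 I -> cond3 I.
Proof.
move=> h2 r x hx; have [G [hs hG]] := h2 r x hx; exists G; split => // i.
exact: (@basis_exp S I r x G hI i (hG i)).
Qed.

Lemma s3_2 : cond3 I -> cond2 I.
Proof.
move=> h3 r x hx; have [G [hs hG]] := h3 r x hx; exists G; split => // i.
exact: (@exp_basis S I r x G hI (mgs_x hx) i (hG i)).
Qed.

Lemma s3_4 : cond3 I -> cond4 I.
Proof.
move=> h3 r x hx; have [G [hs hG]] := h3 r x hx; exists G; split => //.
exact: (@exp_chain S I r x G hI (mgs_x hx) hG).
Qed.

Lemma s4_3 : cond4 I -> cond3 I.
Proof.
move=> h4 r x hx; have [G [hs hG]] := h4 r x hx; exists G; split => // i.
exact: hG.
Qed.

Lemma s4_5 : cond4 I -> cond5 I.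
Proof.
move=> h4 r x hx; have [G [hs hG]] := h4 r x hx; exists G; split => //.
exact: (@exp_inf S I r x G hI (mgs_x hx) hG).
Qed.

Lemma s5_3 : cond5 I -> cond3 I.
Proof.
move=> h5 r x hx; have [G [hs hG]] := h5 r x hx; exists G; split => //.
exact: (@inf_exp S I r x G hI (mgs_x hx) hG).
Qed.

End Final.

Theorem proposition3p9 (S : comNzRingType) (n I : S -> Prop) :
  noetherian S -> local_ring n -> is_ideal I ->
  [/\ strongly_Lech_independent I <-> cond2 I,
      strongly_Lech_independent I <-> cond3 I,
      strongly_Lech_independent I <-> cond4 I &
      complete n -> (strongly_Lech_independent I <-> cond5 I)].
Proof.
move=> noeth loc hI.
have h12 := s1_2 noeth loc hI; have h21 := s2_1 noeth hI.
have h23 := s2_3 hI; have h32 := s3_2 hI; have h34 := s3_4 hI.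
have h43 := @s4_3 S I; have h45 := s4_5 hI; have h53 := s5_3 hI.
split.
- by split.
- by split => h; [apply: h23; apply: h12 | apply: h21; apply: h32].
- by split => h; [apply: h34; apply: h23; apply: h12 | apply: h21; apply: h32; apply: h43].
- by move=> _; split => h; [apply: h45; apply: h34; apply: h23; apply: h12 | apply: h21; apply: h32; apply: h53].
Qed.
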